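(* Let $P=\begin{pmatrix}\alpha&\beta\\\gamma&\delta\end{pmatrix}\in\mathbb{N}_0^{2\times2}$ be an incidence matrix such that (i) there exists a pair $(i,j)\in\{(\alpha,\beta),(\alpha,\gamma),(\delta,\beta),(\delta,\gamma)\}$ with $\gcd(i,j)\neq1$, and (ii) a row (respectively column) of $P$ dominates the other row (respectively column) of $P$. Then $P$ does not exclusively represent irreducible morphisms.
   Context: Let $\Sigma=\{a,b\}$ with $a_1=a,a_2=b$. A morphism $\varphi:\Sigma^+\to\Sigma^+$ (non-empty images) is Parikh-positive if both letters occur in $\varphi(a)\varphi(b)$. Its incidence matrix is $P(\varphi)=(m_{i,j})$ with $m_{i,j}=|\varphi(a_j)|_{a_i}$; throughout, incidence matrices considered have no zero rows or columns. An automorphism is an injective morphism mapping each letter to a single letter; a morphism is reducible if it equals $\psi_2\circ\psi_1$ with neither $\psi_1,\psi_2$ an automorphism, irreducible otherwise. An incidence matrix $P$ exclusively represents irreducible morphisms if every Parikh-positive morphism $\varphi$ with $P(\varphi)=P$ is irreducible. A row (or column) $(x_1,x_2)$ dominates a row (or column) $(y_1,y_2)$ if $x_1\geq y_1$ and $x_2\geq y_2$. *)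

(* Defs.v *)
From mathcomp Require Import all_boot all_algebra.
Set Implicit Arguments. Unset Strict Implicit. Unset Printing Implicit Defensive.

(* Alphabet Sigma = {a, b} encoded as 'I_2 : a_1 = a = ord0, a_2 = b = ord_max. *)
Definition letter := 'I_2.
Definition la : letter := ord0.
Definition lb : letter := ord_max.

Definition word := seq letter.

(* A morphism Sigma^+ -> Sigma^+ is determined by the images of the letters;
   we represent it by that function and require non-empty images. *)
Definition morph := letter -> word.
Definition is_morphism (f : morph) : Prop := forall x, f x != [::].

Definition apply_morph (f : morph) (w : word) : word := flatten (map f w).

Definition comp_morph (psi2 psi1 : morph) : morph :=
  fun x => apply_morph psi2 (psi1 x).

Definition parikh_positive (f : morph) : Prop :=
  la \in f la ++ f lb /\ lb \in f la ++ f lb.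

Definition incidence (f : morph) : 'M[nat]_2 :=
  \matrix_(i < 2, j < 2) count_mem i (f j).

Definition automorphism (f : morph) : Prop :=
  is_morphism f /\ (forall x, size (f x) = 1%N) /\
  (forall u v : word, apply_morph f u = apply_morph f v -> u = v).

Definition reducible (f : morph) : Prop :=
  exists psi1 psi2 : morph,
    [/\ is_morphism psi1, is_morphism psi2,
        ~ automorphism psi1, ~ automorphism psi2 &
        forall x, f x = comp_morph psi2 psi1 x].

Definition irreducible (f : morph) : Prop := ~ reducible f.

Definition excl_irreducible (P : 'M[nat]_2) : Prop :=
  forall f : morph, is_morphism f -> parikh_positive f ->
    incidence f = P -> irreducible f.

Definition row_dominates (P : 'M[nat]_2) (i i' : 'I_2) : Prop :=
  forall j, P i' j <= P i j.
Definition col_dominates (P : 'M[nat]_2) (j j' : 'I_2) : Prop :=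
  forall i, P i j' <= P i j.

Definition no_zero_row_col (P : 'M[nat]_2) : Prop :=
  (forall i, exists j, P i j != 0%N) /\ (forall j, exists i, P i j != 0%N).

(* Main.v *)
Require Import Defs.
From mathcomp Require Import all_boot all_algebra.
From mathcomp Require Import zify.

Lemma I2 (i : 'I_2) : i = la \/ i = lb.
Proof. case: i => [[|[|n]] Hn]; [left|right|by []]; exact: val_inj. Qed.

Lemma count_apply g i w : count_mem i (apply_morph g w) =
  (count_mem la w * count_mem i (g la) + count_mem lb w * count_mem i (g lb))%N.
Proof.
elim: w => [|x w IH] //.
rewrite /apply_morph /= count_cat -/(apply_morph g w) IH.
by case: (I2 x) => ->; case: (I2 i) => -> /=; lia.
Qed.

Definition mk (x11 x21 x12 x22 : nat) : morph :=
  fun j => if j == la then nseq x11 la ++ nseq x21 lb else nseq x12 la ++ nseq x22 lb.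
Definition sc (c : letter) (d : nat) : morph :=
  fun x => if x == c then nseq d x else [:: x].

Lemma cnt_ab n m : count_mem la (nseq n la ++ nseq m lb) = n /\
                   count_mem lb (nseq n la ++ nseq m lb) = m.
Proof. by rewrite !count_cat !count_nseq /=; split; lia. Qed.

Lemma mk_la x11 x21 x12 x22 : mk x11 x21 x12 x22 la = nseq x11 la ++ nseq x21 lb.
Proof. by []. Qed.
Lemma mk_lb x11 x21 x12 x22 : mk x11 x21 x12 x22 lb = nseq x12 la ++ nseq x22 lb.
Proof. by []. Qed.

Lemma not_auto_size g x : size (g x) != 1%N -> ~ automorphism g.
Proof. by move=> H [_ [H2 _]]; move: H; rewrite H2. Qed.

Lemma reduc_gen (P : 'M[nat]_2) (psi1 psi2 : morph) :
  is_morphism psi1 -> is_morphism psi2 -> ~ automorphism psi1 -> ~ automorphism psi2 ->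
  no_zero_row_col P -> incidence (comp_morph psi2 psi1) = P -> ~ excl_irreducible P.
Proof.
move=> m1 m2 a1 a2 [Hr Hc] Hinc Hex.
have Hm : is_morphism (comp_morph psi2 psi1).
  move=> j; have [i Hi] := Hc j; move: Hi; rewrite -Hinc mxE.
  by case: (comp_morph psi2 psi1 j).
have Hp : parikh_positive (comp_morph psi2 psi1).
  have cnt : forall i, i \in comp_morph psi2 psi1 la ++ comp_morph psi2 psi1 lb.
    move=> i; have [j Hj] := Hr i; move: Hj; rewrite -Hinc mxE mem_cat => Hj.
    rewrite -!has_pred1.
    case: (I2 j) Hj => -> Hj; apply/orP; [left|right]; rewrite has_count; lia.
  by split; apply: cnt.
apply: (Hex _ Hm Hp Hinc).
by exists psi1, psi2; split.
Qed.

Lemma mxeq (M N : 'M[nat]_2) : M la la = N la la -> M la lb = N la lb ->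
  M lb la = N lb la -> M lb lb = N lb lb -> M = N.
Proof.
move=> h1 h2 h3 h4; apply/matrixP => i j.
by case: (I2 i) => ->; case: (I2 j) => ->.
Qed.

Lemma mk_morph x y z w : 0 < x + y -> 0 < z + w -> is_morphism (mk x y z w).
Proof.
move=> h1 h2 j; case: (I2 j) => ->; [rewrite mk_la|rewrite mk_lb];
 apply/eqP => /(congr1 size); rewrite size_cat !size_nseq /=; lia.
Qed.

Lemma sc_morph c g : 0 < g -> is_morphism (sc c g).
Proof. by move=> h j; rewrite /sc; case: (j == c); [case: g h|]. Qed.

Lemma sc_na c g : 1 < g -> ~ automorphism (sc c g).
Proof. by move=> h; apply: (@not_auto_size _ c); rewrite /sc eqxx size_nseq; lia. Qed.

Lemma mk_na x y z w : (x + y != 1 \/ z + w != 1) -> ~ automorphism (mk x y z w).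
Proof.
case=> h; [apply: (@not_auto_size _ la)|apply: (@not_auto_size _ lb)];
 by rewrite /mk /= size_cat !size_nseq.
Qed.

Lemma mk_na' x y z w : ~ (x + y = 1 /\ z + w = 1) -> ~ automorphism (mk x y z w).
Proof.
move=> h; apply: mk_na.
case: (boolP (x + y == 1)) => [/eqP e|]; last by left.
case: (boolP (z + w == 1)) => [/eqP e'|]; last by right.
by case: h.
Qed.


Lemma arith_key x11 x21 x12 x22 k11 k21 k12 k22 :
  x11 + x21 = 1 -> x12 + x22 = 1 -> 0 < k11 -> 0 < k21 -> 0 < k12 -> 0 < k22 ->
  0 < x11 * k11 + x12 * k12 -> 0 < x21 * k21 + x22 * k22 ->
  ~ [\/ x21 * k21 <= x11 * k11 /\ x22 * k22 <= x12 * k12,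
        x11 * k11 <= x21 * k21 /\ x12 * k12 <= x22 * k22,
        x12 * k12 <= x11 * k11 /\ x22 * k22 <= x21 * k21 |
        x11 * k11 <= x12 * k12 /\ x21 * k21 <= x22 * k22].
Proof.
move=> h1 h2 k1 k2 k3 k4 H H0.
have l1 : x11 <= 1 by lia. have l2 : x12 <= 1 by lia.
move: H H0; have -> : x21 = 1 - x11 by lia. have -> : x22 = 1 - x12 by lia.
move: l1 l2 {h1 h2}; case: x11 => [|[|x11]] //; case: x12 => [|[|x12]] //= _ _;
 rewrite ?subn0 ?subnn ?mul0n ?mul1n => H H0; case; lia.
Qed.

Theorem proposition24 (P : 'M[nat]_2) :
  no_zero_row_col P ->
  (let alpha := P la la in let beta := P la lb in
   let gamma := P lb la in let delta := P lb lb in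
   [\/ gcdn alpha beta != 1%N, gcdn alpha gamma != 1%N,
       gcdn delta beta != 1%N | gcdn delta gamma != 1%N]) ->
  ((exists i i' : 'I_2, i != i' /\ row_dominates P i i') \/
   (exists j j' : 'I_2, j != j' /\ col_dominates P j j')) ->
  ~ excl_irreducible P.
Proof.
move=> Hnz Hg Hd.
have [Hr Hc] := Hnz.
have r1 : 0 < P la la + P la lb by have [j] := Hr la; case: (I2 j) => ->; lia.
have r2 : 0 < P lb la + P lb lb by have [j] := Hr lb; case: (I2 j) => ->; lia.
have c1 : 0 < P la la + P lb la by have [j] := Hc la; case: (I2 j) => ->; lia.
have c2 : 0 < P la lb + P lb lb by have [j] := Hc lb; case: (I2 j) => ->; lia.
have Dom : [\/ P lb la <= P la la /\ P lb lb <= P la lb,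
                P la la <= P lb la /\ P la lb <= P lb lb,
                P la lb <= P la la /\ P lb lb <= P lb la |
                P la la <= P la lb /\ P lb la <= P lb lb].
  case: Hd => [[i [i' [ne H]]]|[i [i' [ne H]]]];
  case: (I2 i) ne H => ->; case: (I2 i') => -> //= _ H.
  - by constructor 1; split; [apply: (H la)|apply: (H lb)].
  - by constructor 2; split; [apply: (H la)|apply: (H lb)].
  - by constructor 3; split; [apply: (H la)|apply: (H lb)].
  - by constructor 4; split; [apply: (H la)|apply: (H lb)].
case: Hg => /= Hg.
- set g := gcdn _ _ in Hg.
  have ga : g %| P la la by apply: dvdn_gcdl.
  have gb : g %| P la lb by apply: dvdn_gcdr.
  have g0 : 0 < g by rewrite /g gcdn_gt0; lia.
  have g2 : 1 < g by lia.
  have ea := divnK ga; have eb := divnK gb.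
  apply: (@reduc_gen P (mk (P la la %/ g) (P lb la) (P la lb %/ g) (P lb lb)) (sc la g)) => //.
  + apply: mk_morph; nia.
  + apply: sc_morph; lia.
  + apply: mk_na'; case=> h1 h2.
    apply: (@arith_key _ _ _ _ g 1 g 1 h1 h2) => //; rewrite ?muln1 ?ea ?eb //.
  + by apply: sc_na.
  + apply: mxeq; rewrite !mxE /comp_morph !count_apply /mk /sc /= !count_cat !count_nseq /=; lia.
- set g := gcdn _ _ in Hg.
  have ga : g %| P la la by apply: dvdn_gcdl.
  have gb : g %| P lb la by apply: dvdn_gcdr.
  have g0 : 0 < g by rewrite /g gcdn_gt0; lia.
  have g2 : 1 < g by lia.
  have ea := divnK ga; have eb := divnK gb.
  apply: (@reduc_gen P (sc la g) (mk (P la la %/ g) (P lb la %/ g) (P la lb) (P lb lb))) => //.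
  + apply: sc_morph; lia.
  + apply: mk_morph; nia.
  + by apply: sc_na.
  + apply: mk_na'; case=> h1 h2;
    apply: (@arith_key _ _ _ _ g g 1 1 h1 h2) => //; rewrite ?muln1 ?ea ?eb //.
  + apply: mxeq; rewrite !mxE /comp_morph !count_apply /mk /sc /= !count_cat !count_nseq /=; lia.
- set g := gcdn _ _ in Hg.
  have ga : g %| P lb lb by apply: dvdn_gcdl.
  have gb : g %| P la lb by apply: dvdn_gcdr.
  have g0 : 0 < g by rewrite /g gcdn_gt0; lia.
  have g2 : 1 < g by lia.
  have ea := divnK ga; have eb := divnK gb.
  apply: (@reduc_gen P (sc lb g) (mk (P la la) (P lb la) (P la lb %/ g) (P lb lb %/ g))) => //.
  + apply: sc_morph; lia.
  + apply: mk_morph; nia.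
  + by apply: sc_na.
  + apply: mk_na'; case=> h1 h2;
    apply: (@arith_key _ _ _ _ 1 1 g g h1 h2) => //; rewrite ?muln1 ?ea ?eb //.
  + apply: mxeq; rewrite !mxE /comp_morph !count_apply /mk /sc /= !count_cat !count_nseq /=; lia.
- set g := gcdn _ _ in Hg.
  have ga : g %| P lb lb by apply: dvdn_gcdl.
  have gb : g %| P lb la by apply: dvdn_gcdr.
  have g0 : 0 < g by rewrite /g gcdn_gt0; lia.
  have g2 : 1 < g by lia.
  have ea := divnK ga; have eb := divnK gb.
  apply: (@reduc_gen P (mk (P la la) (P lb la %/ g) (P la lb) (P lb lb %/ g)) (sc lb g)) => //.
  + apply: mk_morph; nia.
  + apply: sc_morph; lia.
  + apply: mk_na'; case=> h1 h2;
    apply: (@arith_key _ _ _ _ 1 g 1 g h1 h2) => //; rewrite ?muln1 ?ea ?eb //.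
  + by apply: sc_na.
  + apply: mxeq; rewrite !mxE /comp_morph !count_apply /mk /sc /= !count_cat !count_nseq /=; lia.
Qed.
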